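(* For every integer $n\ge 4$ and every integer $t$ with $2\le t\le n-3$, $\mathrm{wdim}_{2n-2t}(K_n\times K_n)=n^2-tn$.
   Context: $K_n\times K_n$ is the direct product of two complete graphs on $n$ vertices: vertex set $[n]\times[n]$ with $[n]=\{1,\dots,n\}$, and $(i,j)$ adjacent to $(i',j')$ iff $i\ne i'$ and $j\ne j'$. For a connected graph $G$ with distance $d_G$, vertices $x,y,z$ and $S\subseteq V(G)$, let $\Delta_z(x,y)=|d_G(x,z)-d_G(y,z)|$ and $\Delta_S(x,y)=\sum_{z\in S}\Delta_z(x,y)$. A set $S$ is a weak $k$-resolving set if $\Delta_S(x,y)\ge k$ for all distinct $x,y\in V(G)$, and $\mathrm{wdim}_k(G)$ is the minimum cardinality of a weak $k$-resolving set of $G$. *)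

(* Defs.v *)
From mathcomp Require Import all_boot.
Set Implicit Arguments. Unset Strict Implicit. Unset Printing Implicit Defensive.

Section Graphs.
Variable T : finType.
Variable e : rel T.

Fixpoint ball (k : nat) (x : T) : {set T} :=
  match k with
  | 0 => [set x]
  | k'.+1 => ball k' x :|: [set y | [exists z in ball k' x, e z y]]
  end.

(* graph distance: least k with y within k steps of x; in a connected
   graph it is < #|T|, so the default #|T| is never used there *)
Definition gdist (x y : T) : nat :=
  \big[minn/#|T|]_(k < #|T| | y \in ball k x) k.

Definition connected_graph : Prop := forall x y : T, y \in ball #|T| x.

Definition absdiff (a b : nat) : nat := (a - b) + (b - a).

Definition Delta (S : {set T}) (x y : T) : nat :=
  \sum_(z in S) absdiff (gdist x z) (gdist y z).

Definition weak_k_resolving (k : nat) (S : {set T}) : bool :=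
  [forall x, forall y, (x != y) ==> (k <= Delta S x y)].

(* minimum cardinality of a weak k-resolving set (#|T|.+1 if none exists) *)
Definition wdim (k : nat) : nat :=
  \big[minn/#|T|.+1]_(S : {set T} | weak_k_resolving k S) #|S|.
End Graphs.

Definition KnKn_adj (n : nat) : rel ('I_n * 'I_n)%type :=
  fun u v => (u.1 != v.1) && (u.2 != v.2).
Arguments ball {T} e k x.
Arguments gdist {T} e x y.
Arguments connected_graph {T} e.
Arguments Delta {T} e S x y.
Arguments weak_k_resolving {T} e k S.
Arguments wdim {T} e k.
Arguments KnKn_adj : clear implicits.

(* Main.v *)
Require Import Defs.
From mathcomp Require Import all_boot.
From mathcomp Require Import zify.
Set Warnings "-notation-overridden".


Section Dist.
Variable n : nat.
Hypothesis n3 : 3 <= n.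
Notation V := ('I_n * 'I_n)%type.

Definition dd (b1 b2 : bool) : nat :=
  if b1 then (if b2 then 0 else 2) else (if b2 then 2 else 1).
Definition d (u v : V) : nat := dd (u.1 == v.1) (u.2 == v.2).

Lemma d_le2 u v : d u v <= 2.
Proof. by rewrite /d /dd; case: (_ == _); case: (_ == _). Qed.

Lemma d0 u v : (d u v <= 0) = (v == u).
Proof.
case: u v => [a b] [c e]; rewrite /d /dd xpair_eqE /= (eq_sym c) (eq_sym e).
by case: (a == c); case: (b == e).
Qed.

Lemma d1 u v : (d u v == 1) = KnKn_adj n u v.
Proof.
case: u v => [a b] [c e]; rewrite /d /dd /KnKn_adj /=.
by case: (a == c); case: (b == e).
Qed.

Lemma other (p q : 'I_n) : exists a : 'I_n, (a != p) && (a != q).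
Proof.
have : ~~ ([set: 'I_n] \subset [set p; q]).
  apply/negP => /subset_leq_card; rewrite cardsT card_ord cards2.
  by case: (p != q); rewrite /=; lia.
case/subsetPn => a _; rewrite !inE negb_or => H; by exists a.
Qed.

Lemma ball_eq k x : ball (KnKn_adj n) k x = [set y | d x y <= k].
Proof.
elim: k => [|k IH] /=.
  by apply/setP => y; rewrite !inE d0.
apply/setP => y; rewrite IH !inE.
apply/idP/idP.
  case/orP => [H|]; first by apply: leq_trans H _.
  case/existsP => z /andP []; rewrite inE => Hz Hzy.
  case: k IH Hz => [|k] IH Hz; last by apply: leq_trans (d_le2 _ _) _.
  move: Hz; rewrite d0 => /eqP Ez; subst z.
  by move: Hzy; rewrite -d1 => /eqP ->.
rewrite leq_eqVlt ltnS => /orP [/eqP Hd|->]; last by [].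
apply/orP; right; apply/existsP.
case: k IH Hd => [|[|k]] IH Hd.
- exists x; rewrite inE /d /dd !eqxx /= -d1 Hd //.
- clear IH; case: x y Hd => [a b] [c e] Hd.
  have [a' /andP [a1 a2]] := other a c.
  have [b' /andP [b1 b2]] := other b e.
  exists (a', b'); rewrite inE /KnKn_adj /d /dd /= eq_sym (negbTE a1) eq_sym (negbTE b1) /=.
  by rewrite a2 b2.
- have := d_le2 x y; rewrite Hd. lia.
Qed.

Lemma cardV : #|{: V}| = n * n.
Proof. by rewrite card_prod card_ord. Qed.

Lemma bigmin_le (N : nat) (P : pred 'I_N) (i : 'I_N) :
  P i -> \big[minn/N]_(k < N | P k) (k : nat) <= i.
Proof.
move=> Pi; have : i \in index_enum 'I_N by rewrite mem_index_enum.
elim: (index_enum 'I_N) => [|x r IH] //; rewrite inE big_cons.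
case/orP => [/eqP <-|Hr]; first by rewrite Pi geq_minl.
case: (P x); last exact: IH.
by apply: leq_trans (geq_minr _ _) (IH Hr).
Qed.

Lemma bigmin_ge (N m : nat) (P : pred 'I_N) :
  m <= N -> (forall i : 'I_N, P i -> m <= i) ->
  m <= \big[minn/N]_(k < N | P k) (k : nat).
Proof.
move=> HN H; elim: (index_enum 'I_N) => [|x r IH]; rewrite ?big_nil ?big_cons //.
by case: ifP => // Px; rewrite leq_min H.
Qed.

Lemma gdist_eq x y : gdist (KnKn_adj n) x y = d x y.
Proof.
rewrite /gdist.
have hd : d x y < #|{: V}| by rewrite cardV; have := d_le2 x y; nia.
apply/eqP; rewrite eqn_leq; apply/andP; split.
  have := @bigmin_le _ (fun k => y \in ball (KnKn_adj n) k x) (Ordinal hd); rewrite ball_eq inE leqnn; apply=> //.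
have := @bigmin_ge _ (d x y) (fun k => y \in ball (KnKn_adj n) k x) (ltnW hd); apply.
by move=> k; rewrite ball_eq inE.
Qed.

End Dist.
Arguments d {n}.


Section Pt.
Variable n : nat.
Notation V := ('I_n * 'I_n)%type.

Lemma row_pt (i j j' : 'I_n) (z : V) : j != j' ->
  absdiff (d (i,j) z) (d (i,j') z) = (z.2 == j) + (z.2 == j') + (z == (i,j)) + (z == (i,j')).
Proof.
case: z => a b H; rewrite /d /dd /absdiff /= !xpair_eqE ![_ == a]eq_sym ![_ == b]eq_sym.
case: (a == i) => /=; case: (b =P j) => [->|_]; rewrite ?eqxx ?(negbTE H) /=;
  by case: (b == j').
Qed.

Lemma col_pt (i i' j : 'I_n) (z : V) : i != i' ->
  absdiff (d (i,j) z) (d (i',j) z) = (z.1 == i) + (z.1 == i') + (z == (i,j)) + (z == (i',j)).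
Proof.
case: z => a b H; rewrite /d /dd /absdiff /= !xpair_eqE ![_ == a]eq_sym ![_ == b]eq_sym.
case: (b == j) => /=; case: (a =P i) => [->|_]; rewrite ?eqxx ?(negbTE H) /=;
  by case: (a == i').
Qed.

Lemma diag_pt (i i' j j' : 'I_n) (z : V) : i != i' -> j != j' ->
  absdiff (d (i,j) z) (d (i',j') z) + ((z == (i,j)) + (z == (i',j'))) +
     2 * ((z == (i,j')) + (z == (i',j)))
  = (z.1 == i) + (z.1 == i') + (z.2 == j) + (z.2 == j').
Proof.
case: z => a b H H'; rewrite /d /dd /absdiff /= !xpair_eqE ![_ == a]eq_sym ![_ == b]eq_sym.
case: (a =P i) => [->|_]; case: (b =P j) => [->|_]; rewrite ?eqxx ?(negbTE H) ?(negbTE H') /=;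
  try (case: (a == i')); try (case: (b == j')); by [].
Qed.

End Pt.


Lemma sum_delta n (j : 'I_n) : \sum_(k < n) (k == j : nat) = 1.
Proof. by rewrite (bigD1 j) //= eqxx big1 // => k /negbTE ->. Qed.

Lemma half n t (u : 'I_n -> 'I_n -> bool) (m : 'I_n -> nat) :
  3 <= n -> (forall j, m j = \sum_a (u a j : nat)) ->
  (forall i j j', j != j' -> m j + m j' + u i j + u i j' <= 2*t+2) ->
  (\sum_j m j <= t * n) \/
  exists js, m js = t.+1 /\ forall j, m j <= t + (j == js).
Proof.
move=> n3 Hm H.
case: (boolP [forall j, m j <= t]) => [/forallP Hall | /forallPn [js]].
  left; apply: (@leq_trans (\sum_(j < n) t)); first by apply: leq_sum => j _; exact: Hall.
  by rewrite sum_nat_const card_ord mulnC.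
rewrite -ltnNge => Hjs.
have [i0 Hi0] : exists i, u i js.
  case: (boolP [exists i, u i js]) => [/existsP //|/existsPn Hn].
  by move: Hjs; rewrite Hm big1 // => i _; rewrite (negbTE (Hn i)).
have Hb : forall j, j != js -> m js + m j <= 2*t+1.
  move=> j Hj; have := H i0 js j; rewrite eq_sym Hj Hi0 => /(_ isT); lia.
have [j1 /andP [j1a _]] := @other n n3 js js.
have HM := Hb j1 j1a.
have Hsum : \sum_j m j <= m js + (n.-1) * (2*t+1 - m js).
  rewrite (bigD1 js) //= leq_add2l.
  apply: (@leq_trans (\sum_(j < n | j != js) (2*t+1 - m js))).
    by apply: leq_sum => j Hj; have := Hb j Hj; lia.
  by rewrite sum_nat_const cardC1 card_ord.
case: (m js =P t.+1) => [E|NE].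
  right; exists js; split => // j.
  case: (j =P js) => [->|/eqP Hj]; first by rewrite E; lia.
  have := Hb j Hj; lia.
left; apply: leq_trans Hsum _.
have h1 : t + 2 <= m js by lia.
set B := 2*t+1 - m js.
have hB : B + m js = 2*t+1 by rewrite /B; lia.
have hB2 : B <= t - 1 by lia.
have : n.-1 * B <= n.-1 * (t-1) by rewrite leq_mul2l hB2 orbT.
nia.
Qed.

Lemma comb n t (u : 'I_n -> 'I_n -> bool) :
  2 <= t -> 3 <= n ->
  (forall i j j', j != j' ->
     \sum_a (u a j : nat) + \sum_a (u a j' : nat) + u i j + u i j' <= 2*t+2) ->
  (forall j i i', i != i' ->
     \sum_b (u i b : nat) + \sum_b (u i' b : nat) + u i j + u i' j <= 2*t+2) ->
  \sum_j \sum_a (u a j : nat) <= t * n.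
Proof.
move=> t2 n3 H1 H2.
set m := fun j => \sum_a (u a j : nat).
set p := fun i => \sum_b (u i b : nat).
have Ex : \sum_j m j = \sum_i p i by rewrite /m /p exchange_big.
rewrite -/(\sum_j m j).
have [A|[js [Ejs Bjs]]] := @half n t u m n3 (fun j => erefl (m j)) H1; first by [].
have [A|[ist [Eist Bist]]] := @half n t (fun a b => u b a) p n3 (fun j => erefl (p j))
   (fun i j j' Hj => H2 i j j' Hj); first by rewrite Ex.
case: (boolP [exists i, exists j, (j != js) && u i js && u i j]).
  case/existsP => i /existsP [j /andP [/andP [Hj Hijs] Hij]].
  have := H1 i js j; rewrite eq_sym Hj Hijs Hij => /(_ isT); rewrite -/(m js) -/(m j) => Hmj.
  have : \sum_k (m k + (k == j)) <= \sum_k (t + (k == js)).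
    apply: leq_sum => k _.
    case: (k =P js) => [->|/eqP Hk]; first by rewrite Ejs eq_sym (negbTE Hj); lia.
    case: (k =P j) => [->|_]; first by lia.
    have := Bjs k; rewrite (negbTE Hk); lia.
  rewrite !big_split /= sum_delta sum_nat_const card_ord sum_delta. lia.
move/existsPn => Hno.
have Hno' : forall i j, j != js -> u i js -> ~~ u i j.
  move=> i j Hj Hi; have := Hno i; move/existsPn => /(_ j); by rewrite Hj Hi.
have Hp1 : forall i, u i js -> p i = 1.
  move=> i Hi; rewrite /p (bigD1 js) //= Hi big1 // => j Hj.
  by rewrite (negbTE (Hno' i j Hj Hi)).
have Nist : ~~ u ist js.
  apply/negP => Hi; have := Hp1 ist Hi; rewrite Eist; lia.
have : \sum_i (p i + (t-1) * u i js) <= \sum_i (t + (i == ist)).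
  apply: leq_sum => i _.
  case: (i =P ist) => [->|/eqP Hi]; first by rewrite (negbTE Nist) Eist /= muln0 addn0 addn1.
  case: (boolP (u i js)) => Hu; first by rewrite Hp1 //; lia.
  have := Bist i; rewrite (negbTE Hi); lia.
rewrite !big_split /= -big_distrr /= -/(m js) Ejs sum_nat_const card_ord sum_delta -Ex.
have : 3 <= (t-1) * t.+1 by (have : 1 <= t - 1 by lia); nia.
move=> h1 h2; rewrite mulnC; move: h1 h2; generalize ((t-1)*t.+1) => q.
pose s := \sum_(j < n) m j; change (3 <= q -> s + q <= n * t + 1 -> s <= n * t); lia.
Qed.


Lemma bigmin_le' (I : finType) (N : nat) (P : pred I) (F : I -> nat) (i : I) :
  P i -> \big[minn/N]_(k | P k) F k <= F i.
Proof.
move=> Pi; have : i \in index_enum I by rewrite mem_index_enum.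
elim: (index_enum I) => [|x r IH] //; rewrite inE big_cons.
case/orP => [/eqP <-|Hr]; first by rewrite Pi geq_minl.
case: (P x); last exact: IH.
by apply: leq_trans (geq_minr _ _) (IH Hr).
Qed.

Lemma bigmin_ge' (I : finType) (N m : nat) (P : pred I) (F : I -> nat) :
  m <= N -> (forall i, P i -> m <= F i) ->
  m <= \big[minn/N]_(k | P k) F k.
Proof.
move=> HN H; elim: (index_enum I) => [|x r IH]; rewrite ?big_nil ?big_cons //.
by case: ifP => // Px; rewrite leq_min H.
Qed.

Lemma sum_ge (t N : nat) : \sum_(k < N) (t <= k : nat) = N - t.
Proof.
elim: N => [|N IH]; first by rewrite big_ord0.
rewrite big_ord_recr /= IH; case: (leqP t N) => H /=; lia.
Qed.

Section Main.
Variable n : nat.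
Hypothesis n3 : 3 <= n.
Notation V := ('I_n * 'I_n)%type.

Lemma sum_in_pair (S : {set V}) (F : V -> nat) :
  \sum_(z in S) F z = \sum_a \sum_b (((a,b) \in S) * F (a,b)).
Proof.
rewrite pair_big /= big_mkcond; apply: eq_bigr => -[a b] _ /=.
by case: ((a,b) \in S); rewrite ?mul1n ?mul0n.
Qed.

Lemma sum_col (S : {set V}) j :
  \sum_(z in S) (z.2 == j : nat) = \sum_a ((a,j) \in S : nat).
Proof.
rewrite sum_in_pair; apply: eq_bigr => a _.
rewrite (bigD1 j) //= eqxx muln1 big1 ?addn0 // => b /negbTE ->; by rewrite muln0.
Qed.

Lemma sum_row (S : {set V}) i :
  \sum_(z in S) (z.1 == i : nat) = \sum_b ((i,b) \in S : nat).
Proof.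
rewrite sum_in_pair (bigD1 i) //= [X in _ + X]big1 ?addn0.
  by apply: eq_bigr => b _; rewrite eqxx muln1.
move=> a /negbTE Ha; apply: big1 => b _; by rewrite /= Ha muln0.
Qed.

Lemma sum_pt (S : {set V}) w : \sum_(z in S) (z == w : nat) = (w \in S).
Proof.
rewrite big_mkcond (bigD1 w) //= eqxx big1 ?addn0; first by case: (w \in S).
move=> z /negbTE ->; by case: (z \in S).
Qed.

Lemma cardS (S : {set V}) : #|S| = \sum_a \sum_b ((a,b) \in S : nat).
Proof.
rewrite -sum1_card sum_in_pair; apply: eq_bigr => a _; apply: eq_bigr => b _.
by rewrite muln1.
Qed.

Lemma Delta_d S x y :
  Delta (KnKn_adj n) S x y = \sum_(z in S) absdiff (d x z) (d y z).
Proof. by apply: eq_bigr => z _; rewrite !(@gdist_eq n n3). Qed.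

Lemma Delta_row S (i j j' : 'I_n) : j != j' ->
  Delta (KnKn_adj n) S (i,j) (i,j') =
  \sum_a ((a,j) \in S : nat) + \sum_a ((a,j') \in S : nat) + ((i,j) \in S) + ((i,j') \in S).
Proof.
move=> Hj; rewrite Delta_d.
under eq_bigr => z _ do rewrite (@row_pt n i j j' z Hj).
by rewrite !big_split /= !sum_col !sum_pt.
Qed.

Lemma Delta_col S (i i' j : 'I_n) : i != i' ->
  Delta (KnKn_adj n) S (i,j) (i',j) =
  \sum_b ((i,b) \in S : nat) + \sum_b ((i',b) \in S : nat) + ((i,j) \in S) + ((i',j) \in S).
Proof.
move=> Hi; rewrite Delta_d.
under eq_bigr => z _ do rewrite (@col_pt n i i' j z Hi).
by rewrite !big_split /= !sum_row !sum_pt.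
Qed.

Lemma Delta_diag S (i i' j j' : 'I_n) : i != i' -> j != j' ->
  Delta (KnKn_adj n) S (i,j) (i',j') + (((i,j) \in S) + ((i',j') \in S))
   + 2 * (((i,j') \in S) + ((i',j) \in S)) =
  \sum_b ((i,b) \in S : nat) + \sum_b ((i',b) \in S : nat) +
  \sum_a ((a,j) \in S : nat) + \sum_a ((a,j') \in S : nat).
Proof.
move=> Hi Hj; rewrite Delta_d.
have E : \sum_(z in S) (absdiff (d (i,j) z) (d (i',j') z) + ((z == (i,j)) + (z == (i',j')) : nat)
   + 2 * ((z == (i,j')) + (z == (i',j)) : nat)) =
  \sum_(z in S) ((z.1 == i) + (z.1 == i') + (z.2 == j) + (z.2 == j') : nat).
  by apply: eq_bigr => z _; exact: diag_pt.
set D := \sum_(z in S) absdiff _ _.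
rewrite big_split /= big_split /= -big_distrr /= -/D in E.
rewrite !big_split /= !sum_row !sum_col !sum_pt in E; exact E.
Qed.

End Main.


Section Final.
Variable n t : nat.
Hypothesis n3 : 3 <= n.
Hypothesis t2 : 2 <= t.
Hypothesis tn : t + 3 <= n.
Notation V := ('I_n * 'I_n)%type.

Lemma lower (S : {set V}) :
  weak_k_resolving (KnKn_adj n) (2*n - 2*t) S -> n*n - t*n <= #|S|.
Proof.
move/forallP => W.
have W' : forall x y, x != y -> 2*n-2*t <= Delta (KnKn_adj n) S x y.
  by move=> x y; have /forallP/(_ y)/implyP := W x.
pose u := fun a b => (a,b) \notin S.
have col1 : forall j, \sum_(a < n) ((a,j) \in S : nat) + \sum_(a < n) (u a j : nat) = n.
  move=> j; rewrite -big_split /= (eq_bigr (fun=> 1)) ?sum_nat_const ?card_ord ?muln1 //.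
  by move=> a _; rewrite /u; case: (_ \in S).
have row1 : forall i, \sum_(b < n) ((i,b) \in S : nat) + \sum_(b < n) (u i b : nat) = n.
  move=> i; rewrite -big_split /= (eq_bigr (fun=> 1)) ?sum_nat_const ?card_ord ?muln1 //.
  by move=> b _; rewrite /u; case: (_ \in S).
have H1 : forall i j j', j != j' ->
    \sum_a (u a j : nat) + \sum_a (u a j' : nat) + u i j + u i j' <= 2*t+2.
  move=> i j j' Hj.
  have Hne : (i,j) != (i,j') by rewrite xpair_eqE eqxx andTb.
  have := W' _ _ Hne; rewrite (@Delta_row n n3) //.
  have := col1 j; have := col1 j'; rewrite /u.
  set A1 := \sum_(a < n) ((a,j) \in S : nat); set A2 := \sum_(a < n) ((a,j') \in S : nat).
  set B1 := \sum_(a < n) ((a,j) \notin S : nat); set B2 := \sum_(a < n) ((a,j') \notin S : nat).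
  case: ((i,j) \in S); case: ((i,j') \in S) => /=; lia.
have H2 : forall j i i', i != i' ->
    \sum_b (u i b : nat) + \sum_b (u i' b : nat) + u i j + u i' j <= 2*t+2.
  move=> j i i' Hi.
  have Hne : (i,j) != (i',j) by rewrite xpair_eqE eqxx andbT.
  have := W' _ _ Hne; rewrite (@Delta_col n n3) //.
  have := row1 i; have := row1 i'; rewrite /u.
  set A1 := \sum_(b < n) ((i,b) \in S : nat); set A2 := \sum_(b < n) ((i',b) \in S : nat).
  set B1 := \sum_(b < n) ((i,b) \notin S : nat); set B2 := \sum_(b < n) ((i',b) \notin S : nat).
  case: ((i,j) \in S); case: ((i',j) \in S) => /=; lia.
have C := @comb n t u t2 n3 H1 H2.
rewrite exchange_big /= in C.
have T : \sum_a \sum_b ((a,b) \in S : nat) + \sum_a \sum_b (u a b : nat) = n * n.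
  rewrite -big_split /= (eq_bigr (fun=> n)) ?sum_nat_const ?card_ord //.
rewrite cardS.
move: C T; set X := \sum_a \sum_b _; set Y := \sum_a \sum_b _; lia.
Qed.

Definition S0 : {set V} := [set z : V | t <= (z.1 + z.2) %% n].

Lemma cnt (i : 'I_n) : \sum_(b < n) (t <= (i + b) %% n : nat) = n - t.
Proof.
have n0 : 0 < n by lia.
pose h := fun b : 'I_n => Ordinal (ltn_pmod (i + b) n0).
have hinj : injective h.
  move=> b1 b2 /(congr1 val) /= /eqP; rewrite eqn_modDl !modn_small // => /eqP.
  exact: ord_inj.
by rewrite -(sum_ge t n) [RHS](reindex_inj hinj).
Qed.

Lemma row_cnt i : \sum_b ((i,b) \in S0 : nat) = n - t.
Proof. by rewrite -(cnt i); apply: eq_bigr => b _; rewrite inE. Qed.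

Lemma col_cnt j : \sum_a ((a,j) \in S0 : nat) = n - t.
Proof. by rewrite -(cnt j); apply: eq_bigr => a _; rewrite inE /= addnC. Qed.

Lemma S0_res : weak_k_resolving (KnKn_adj n) (2*n - 2*t) S0.
Proof.
apply/forallP => -[i j]; apply/forallP => -[i' j']; apply/implyP => Hxy.
case: (i =P i') => [Ei|/eqP Hi].
  subst i'; have Hj : j != j' by move: Hxy; rewrite xpair_eqE eqxx.
  rewrite (@Delta_row n n3) // !col_cnt; lia.
case: (j =P j') => [Ej|/eqP Hj].
  subst j'; rewrite (@Delta_col n n3) // !row_cnt; lia.
have := @Delta_diag n n3 S0 _ _ _ _ Hi Hj; rewrite !row_cnt !col_cnt.
case: ((i,j) \in S0); case: ((i',j') \in S0); case: ((i,j') \in S0);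
  case: ((i',j) \in S0) => /=; lia.
Qed.

Lemma card_S0 : #|S0| = n * (n - t).
Proof.
rewrite cardS (eq_bigr (fun=> n - t)) ?sum_nat_const ?card_ord //.
by move=> a _; exact: row_cnt.
Qed.

End Final.


Theorem mainTheorem9 (n t : nat) :
  4 <= n -> 2 <= t -> t <= n - 3 ->
  wdim (KnKn_adj n) (2 * n - 2 * t) = n ^ 2 - t * n.
Proof.
move=> n4 t2 t3.
have n3 : 3 <= n by lia.
have tn : t + 3 <= n by lia.
have E2 : n ^ 2 = n * n by rewrite expnS expn1.
rewrite E2 /wdim.
apply/eqP; rewrite eqn_leq; apply/andP; split.
  have W0 := @S0_res n t n3 t2 tn.
  have := @bigmin_le' _ (#|{: ('I_n * 'I_n)%type}|.+1) _ (fun S : {set 'I_n * 'I_n} => #|S|) _ W0.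
  move=> H; apply: leq_trans H _.
  rewrite (@card_S0 n t n3 t2 tn) mulnBr mulnC; lia.
apply: bigmin_ge'.
  rewrite card_prod !card_ord; lia.
move=> S HS; exact: (@lower n t n3 t2 tn S HS).
Qed.
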